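(* Let $\mathcal X$ be a nonsingular plane curve of degree $r+1$ (with $r\ge2$) and genus $g$ over $\mathbf F_q$ with at least one $\mathbf F_q$-rational point. Let $U(\mathcal X)$ be its set of jumps. Then: (1) $|U(\mathcal X)|=R(2g-2)$, and this number equals $r^2/4$ if $r$ is even and $(r^2-1)/4$ if $r$ is odd. (2) $U(\mathcal X)=\{\alpha r+\beta: -1\le\alpha\le r-2,\ 0\le\beta\le r-1,\ \text{and } (2\beta+2\le\alpha \text{ or } \beta=r-1)\}\setminus\{2g-1\}$.
   Context: $\ell(A)=\dim_{\mathbf F_q}\mathcal L(A)$. For $i\ge1$, $\gamma_i=\min\{\deg A: A\ \mathbf F_q\text{-rational divisor},\ \ell(A)\ge i\}$. For such a plane curve it is known that $GS(\mathcal X)=\{\gamma_i\}$ is the numerical semigroup generated by $r$ and $r+1$, and that $g=r(r-1)/2$. Let $\mathbf N'=\{-1,0,1,\dots\}$. Define $\tilde\ell(-1)=0$ and $\tilde\ell(b)=\max\{i\ge1:\gamma_i\le b\}$ for $b\ge0$. For $-1\le N\le 2g-2$, let $R(N)=\min\{\tilde\ell(a)+\tilde\ell(b):a,b\in\mathbf N',\ a+b=N\}$, and set $R(-2):=0$. An integer $N$ with $-1\le N\le 2g-2$ is a jump of $\mathcal X$ if $R(N)>R(N-1)$; $U(\mathcal X)$ is the set of jumps. *)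

(* Defs.v *)
From mathcomp Require Import all_boot all_order all_algebra.
Set Implicit Arguments. Unset Strict Implicit. Unset Printing Implicit Defensive.
Import Order.TTheory GRing.Theory Num.Theory.

(* The numerical semigroup GS(X) = <r, r+1> (known for a nonsingular plane
   curve of degree r+1). *)
Definition inS (r n : nat) : bool :=
  has (fun a => has (fun b => a * r + b * r.+1 == n) (iota 0 n.+1)) (iota 0 n.+1).

(* The elements 0, r, ..., (i-1) r lie in the semigroup, so the i-th smallest
   element is <= i*r and appears in the listed range. *)
Definition gamma (r i : nat) : nat :=
  nth 0 [seq n <- iota 0 (i * r).+1 | inS r n] i.-1.

Definition genus (r : nat) : nat := r * (r - 1) %/ 2.

(* tilde ell(b) = max{ i >= 1 : gamma_i <= b } for b >= 0. Since gamma is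
   strictly increasing with gamma_1 = 0, gamma_i >= i - 1, so every such i
   is < b + 2. *)
Definition tl (r b : nat) : nat :=
  \max_(1 <= i < b.+2 | gamma r i <= b) i.

Definition tlz (r : nat) (b : int) : nat :=
  match b with Posz n => tl r n | Negz _ => 0 end.

(* R(N) = min{ tl a + tl b : a, b >= -1, a + b = N } for N >= -1; R(-2) = 0.
   Here a = k - 1 ranges over -1, ..., N+1. *)
Definition Rfun (r : nat) (N : int) : nat :=
  if (N <= -2)%R then 0%N
  else \big[minn/(tlz r (-1) + tlz r (N + 1))%N]_(0 <= k < absz (N + 3)%R)
         (tlz r (k%:Z - 1) + tlz r (N - (k%:Z - 1)))%N.

Definition is_jump (r : nat) (N : int) : bool :=
  [&& (-1 <= N)%R, (N <= (genus r)%:Z * 2 - 2)%R & (Rfun r (N - 1) < Rfun r N)%N].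

Definition jumps (r : nat) : seq int :=
  [seq N <- [seq (k%:Z - 1)%R | k <- iota 0 (2 * genus r)%N] | is_jump r N].

(* Main.v *)
Require Import Defs.
From mathcomp Require Import all_boot all_order all_algebra.
Import Order.TTheory GRing.Theory Num.Theory.
From Stdlib Require Import ZArith Lia.
From mathcomp Require Import zify.

Lemma sqhZ (t : Z) : (0 <= t*t /\ t <= t*t /\ -t <= t*t)%Z.
Proof. nia. Qed.

(* FZ2 = 2 * F for alpha = 2q+p *)
Lemma core2 (r q p b k j k' j' e : Z) :
  (2 <= r -> 0 <= p <= 1 -> 0 <= q -> 2*q+p <= r-2 -> 0 <= b <= r-1 ->
  0 <= k -> 0 <= k' -> 0 <= j <= r-1 -> 0 <= j' <= r-1 ->
  ((b = r-1 /\ e = 1) \/ (b < r-1 /\ e = 0)) ->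
  ((k+k' = 2*q+p /\ j+j' = b) \/ (k+k'+1 = 2*q+p /\ j+j' = b+r)) ->
  2*(2*q+p+1 + (q*q - q + p*q) + Z.min (b+1) q + e)
   <= k*(k+1)+k'*(k'+1) + 2*Z.min j k + 2*Z.min j' k' + 4)%Z.
Proof.
intros.
assert (exists t, k = q + t)%Z as [t ->] by (exists (k-q)%Z; lia).
pose proof (sqhZ t).
destruct (Z.min_spec (b+1) q) as [[? ->]|[? ->]];
destruct (Z.min_spec j (q+t)) as [[? ->]|[? ->]];
destruct (Z.min_spec j' k') as [[? ->]|[? ->]];
(assert (p = 0 \/ p = 1)%Z as [-> | ->] by lia);
(assert (k' = 2*q - q - t \/ k' = 2*q-1 - q - t \/ k' = 2*q+1 - q - t)%Z as [->|[->| ->]] by lia);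
nia.
Qed.

Lemma core1 (r q p b K J e : Z) :
  (2 <= r -> 0 <= p <= 1 -> 0 <= q -> 2*q+p <= r-2 -> 0 <= b <= r-1 ->
  ((b = r-1 /\ e = 1) \/ (b < r-1 /\ e = 0)) ->
  ((K = 2*q+p /\ J = b+1 /\ b+1 <= r-1) \/ (K = 2*q+p+1 /\ J = 0 /\ b = r-1)) ->
  2*(2*q+p+1 + (q*q - q + p*q) + Z.min (b+1) q + e)
   <= K*(K+1) + 2*Z.min J K + 2)%Z.
Proof.
intros.
destruct (Z.min_spec (b+1) q) as [[? ->]|[? ->]];
destruct (Z.min_spec J K) as [[? ->]|[? ->]];
(assert (p = 0 \/ p = 1)%Z as [-> | ->] by lia); nia.
Qed.

Lemma inS_char r n : 0 < r -> inS r n = (n %% r <= n %/ r).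
Proof.
move=> r0; rewrite /inS; apply/hasP/idP.
- case=> a _ /hasP [b _ /eqP <-].
  have -> : a * r + b * r.+1 = (a + b) * r + b by rewrite mulnSr mulnDl addnA.
  rewrite modnMDl divnMDl //.
  move: (b %% r) (b %/ r) (leq_mod b r) => x y; lia.
- move=> h; exists (n %/ r - n %% r); first by rewrite mem_iota /= add0n ltnS (leq_trans (leq_subr _ _)) // leq_div.
  apply/hasP; exists (n %% r); first by rewrite mem_iota /= add0n ltnS leq_mod.
  apply/eqP; rewrite mulnSr mulnBl addnA subnK; last by rewrite leq_mul2r h orbT.
  by rewrite -divn_eq.
Qed.

Lemma inS_KJ r K J : 0 < r -> J < r -> inS r (K * r + J) = (J <= K).
Proof.
by move=> r0 Jr; rewrite inS_char // modnMDl divnMDl // modn_small // divn_small // addn0.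
Qed.

Definition cnt r n := count (inS r) (iota 0 n.+1).

Lemma cntS r n : cnt r n.+1 = cnt r n + inS r n.+1.
Proof. by rewrite /cnt -addn1 iotaD count_cat /= addn0 add0n. Qed.

Lemma cnt0 r : cnt r 0 = 1.
Proof. by []. Qed.

Lemma cnt_KJ r : 0 < r -> forall K J, J < r -> K < r ->
  2 * cnt r (K * r + J) = K * (K + 1) + 2 * minn J K + 2.
Proof.
move=> r0; elim=> [|K IHK] J.
- elim: J => [|J IHJ] Jr Kr.
  + by rewrite mul0n add0n cnt0.
  + rewrite mul0n add0n in IHJ *; rewrite cntS mulnDr IHJ ?(ltnW Jr) //.
    have := @inS_KJ r 0 J.+1 r0 Jr; rewrite mul0n add0n => ->; lia.
- elim: J => [|J IHJ] Jr Kr.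
  + have -> : K.+1 * r + 0 = (K * r + r.-1).+1 by rewrite mulSn; lia.
    rewrite cntS mulnDr IHK; [|lia|lia].
    have -> : (K * r + r.-1).+1 = K.+1 * r + 0 by rewrite mulSn; lia.
    rewrite inS_KJ //; nia.
  + have -> : K.+1 * r + J.+1 = (K.+1 * r + J).+1 by lia.
    rewrite cntS mulnDr IHJ; [|lia|lia].
    have -> : (K.+1 * r + J).+1 = K.+1 * r + J.+1 by lia.
    rewrite inS_KJ //; lia.
Qed.

Lemma cnt_closed r n : 0 < r -> n < r * r ->
  2 * cnt r n = (n %/ r) * (n %/ r + 1) + 2 * minn (n %% r) (n %/ r) + 2.
Proof.
move=> r0 nr; rewrite {1}(divn_eq n r) cnt_KJ // ?ltn_pmod // ltn_divLR //.
Qed.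

Lemma count_iota_mono (P : pred nat) m m' : m <= m' ->
  count P (iota 0 m) <= count P (iota 0 m').
Proof.
by move=> h; rewrite -(subnKC h) iotaD count_cat leq_addr.
Qed.

Lemma nth_filter_iota (P : pred nat) M i b : i < count P (iota 0 M) ->
  (nth 0 [seq x <- iota 0 M | P x] i <= b) = (i < count P (iota 0 (minn b.+1 M))).
Proof.
elim: M i => [|M IH] i //.
have E : iota 0 M.+1 = iota 0 M ++ [:: M] by rewrite -addn1 iotaD.
rewrite E filter_cat count_cat /= addn0.
case PM: (P M) => /=.
- rewrite nth_cat size_filter addn1 ltnS.
  case: (ltngtP i (count P (iota 0 M))) => // [lti|->] _.
  + rewrite IH //.
    case: (leqP b.+1 M) => hb.
    * by have -> : minn b.+1 M.+1 = b.+1 by lia.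
    * have -> : minn b.+1 M.+1 = M.+1 by lia.
      by rewrite E count_cat /= PM addn1 ltnS lti (ltnW lti).
  + rewrite subnn /=.
    case: (leqP M b) => hb.
    * have -> : minn b.+1 M.+1 = M.+1 by lia.
      by rewrite E count_cat /= PM addn1 ltnSn.
    * have -> : minn b.+1 M.+1 = b.+1 by lia.
      apply/esym/negbTE; rewrite -leqNgt.
      exact: count_iota_mono.
- rewrite addn0 cats0 => lti; rewrite IH //.
  case: (leqP b.+1 M) => hb.
  + by have -> : minn b.+1 M.+1 = b.+1 by lia.
  + have -> : minn b.+1 M.+1 = M.+1 by lia.
    by rewrite E count_cat /= PM -[X in _ + X]/0 addn0.
Qed.

Lemma count_mult r i : 0 < r -> i <= count (inS r) (iota 0 (i * r).+1).
Proof.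
move=> r0; elim: i => [|i IH] //.
have -> : (i.+1 * r).+1 = (i * r).+1 + r by rewrite mulSn; lia.
rewrite iotaD count_cat.
have : 0 < count (inS r) (iota (0 + (i * r).+1) r).
  rewrite -has_count; apply/hasP; exists (i.+1 * r).
    rewrite mem_iota add0n mulSn; lia.
  by have := @inS_KJ r i.+1 0 r0 r0; rewrite addn0 => ->.
lia.
Qed.

Lemma gamma_le r i b : 0 < r -> 0 < i -> (gamma r i <= b) = (i <= cnt r b).
Proof.
move=> r0 i0; rewrite /gamma.
have hc := @count_mult r i r0.
rewrite nth_filter_iota; last by rewrite prednK.
rewrite prednK //.
case: (leqP b.+1 (i * r).+1) => hb.
- by [].
- rewrite hc; apply/esym/(leq_trans hc).
  exact/count_iota_mono/ltnW.
Qed.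

Lemma tl_cnt r b : 0 < r -> tl r b = cnt r b.
Proof.
move=> r0; rewrite /tl; apply/eqP; rewrite eqn_leq; apply/andP; split.
- apply/bigmax_leqP_seq => i; rewrite mem_index_iota => /andP [i1 _].
  by rewrite gamma_le.
- apply: (@leq_bigmax_seq nat _ _ (fun i => i) (cnt r b)).
  + rewrite mem_index_iota ltnS /cnt (leq_trans (count_size _ _)) ?size_iota //.
  + rewrite gamma_le //.
Qed.

Definition Fn r n :=
  let a := n %/ r in let b := n %% r in
  a.+1 + (a./2 * a./2 - a./2 + odd a * a./2) + minn b.+1 a./2 + (b == r.-1).

Lemma Fn_Z r n : exists q p : nat, n %/ r = 2 * q + p /\ p <= 1 /\
  Z.of_nat (Fn r n) = (Z.of_nat (2*q+p) + 1 + (Z.of_nat q * Z.of_nat q - Z.of_nat q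
     + Z.of_nat p * Z.of_nat q) + Z.min (Z.of_nat (n %% r) + 1) (Z.of_nat q)
     + Z.of_nat (n %% r == r.-1))%Z.
Proof.
exists (n %/ r)./2, (odd (n %/ r)); rewrite /Fn.
have h := odd_double_half (n %/ r).
move: (n %/ r) h => a h.
have hq : (a./2 <= a./2 * a./2) \/ a./2 = 0.
  case: (a./2) => [|m]; [by right| left; rewrite mulSn; lia].
have hp : nat_of_bool (odd a) <= 1 by case: (odd a).
move: (a./2) (nat_of_bool (odd a)) h hq hp => q p h hq hp.
split; first by rewrite -h -muln2; lia.
split; first by [].
subst a; rewrite -?muln2; move: (_ == _) => e; case: hq => hq; lia.
Qed.

Lemma uniq_dm r x y s t : 0 < r -> x * r + s = y * r + t -> s < r -> t < r -> x = y /\ s = t.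
Proof.
move=> r0 E sr tr; split.
- by have := congr1 (divn^~ r) E; rewrite /= !divnMDl // !divn_small // !addn0.
- by have := congr1 (modn^~ r) E; rewrite /= !modnMDl // !modn_small.
Qed.

Arguments uniq_dm {r x y s t}.

Lemma eps_split r x y s t : 0 < r -> x * r + s = y * r + t -> s < r + r -> t < r ->
  (x = y /\ s = t) \/ (x.+1 = y /\ s = t + r).
Proof.
move=> r0 E sr tr; case: (ltnP s r) => hs.
- by left; apply: (uniq_dm r0 E hs tr).
- right; have E' : x.+1 * r + (s - r) = y * r + t by rewrite mulSn; lia.
  have [] := uniq_dm r0 E' _ tr; lia.
Qed.

Lemma alpha_bound r n : 2 <= r -> n <= r * (r - 1) - 2 -> n %/ r <= r - 2.
Proof.
move=> r2 hn; have : n %/ r < r - 1 by rewrite ltn_divLR; nia.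
lia.
Qed.

Lemma low1 r n : 2 <= r -> n <= r * (r - 1) - 2 -> 2 * Fn r n <= 2 * cnt r n.+1.
Proof.
move=> r2 hn; have r0 : 0 < r by lia.
rewrite cnt_closed //; last by nia.
have ha := @alpha_bound r n r2 hn.
have [q [p [hq [hp hF]]]] := Fn_Z r n.
have hn2 := divn_eq n r; have hb := ltn_pmod n r0.
have hd := divn_eq n.+1 r; have hm := ltn_pmod n.+1 r0.
move: hF; move: (n.+1 %/ r) (n.+1 %% r) hd hm => K J hd hm hF.
have hKJ : (K = n %/ r /\ J = (n %% r).+1 /\ (n %% r).+1 < r) \/
           (K = (n %/ r).+1 /\ J = 0 /\ (n %% r).+1 = r).
  case: (ltnP (n %% r).+1 r) => h.
  - left; have E : K * r + J = n %/ r * r + (n %% r).+1 by lia.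
    have [] := uniq_dm r0 E hm h; lia.
  - right; have E : K * r + J = (n %/ r).+1 * r + 0 by rewrite mulSn; lia.
    have [] := uniq_dm r0 E hm r0; lia.
have he : (n %% r == r.-1) = ((n %% r).+1 == r) by apply/eqP/eqP; lia.
move: hF; rewrite he; case: eqP => he2 hF.
- have := core1 (Z.of_nat r) (Z.of_nat q) (Z.of_nat p) (Z.of_nat (n %% r)) (Z.of_nat K) (Z.of_nat J) 1%Z.
  lia.
- have := core1 (Z.of_nat r) (Z.of_nat q) (Z.of_nat p) (Z.of_nat (n %% r)) (Z.of_nat K) (Z.of_nat J) 0%Z.
  lia.
Qed.

Arguments eps_split {r x y s t}.

Lemma low2 r n a b : 2 <= r -> n <= r * (r - 1) - 2 -> a + b = n ->
  2 * Fn r n <= 2 * cnt r a + 2 * cnt r b.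
Proof.
move=> r2 hn hab; have r0 : 0 < r by lia.
rewrite (@cnt_closed r a r0) ?(@cnt_closed r b r0); [|nia|nia].
have ha := @alpha_bound r n r2 hn.
have [q [p [hq [hp hF]]]] := Fn_Z r n.
have hn2 := divn_eq n r; have hb := ltn_pmod n r0.
have hda := divn_eq a r; have hma := ltn_pmod a r0.
have hdb := divn_eq b r; have hmb := ltn_pmod b r0.
move: hF hn2 hb ha hq; move: (n %/ r) (n %% r) => al be hF hn2 hb ha hq.
move: (a %/ r) (a %% r) hda hma => Ka Ja hda hma.
move: (b %/ r) (b %% r) hdb hmb => Kb Jb hdb hmb.
have E : (Ka + Kb) * r + (Ja + Jb) = al * r + be by rewrite mulnDl; lia.
have := eps_split r0 E ltac:(lia) hb => hE.
clear E hda hdb hab hn2.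
move: hF; case: eqP => he2 hF.
- have := core2 (Z.of_nat r) (Z.of_nat q) (Z.of_nat p) (Z.of_nat be) (Z.of_nat Ka) (Z.of_nat Ja) (Z.of_nat Kb) (Z.of_nat Jb) 1%Z.
  lia.
- have := core2 (Z.of_nat r) (Z.of_nat q) (Z.of_nat p) (Z.of_nat be) (Z.of_nat Ka) (Z.of_nat Ja) (Z.of_nat Kb) (Z.of_nat Jb) 0%Z.
  lia.
Qed.

Set Bullet Behavior "Strict Subproofs".

Lemma up r n : 2 <= r -> n <= r * (r - 1) - 2 ->
  (exists i, i <= n /\ 2 * (cnt r i + cnt r (n - i)) <= 2 * Fn r n) \/
  2 * cnt r n.+1 <= 2 * Fn r n.
Proof.
move=> r2 hn; have r0 : 0 < r by lia.
have ha := @alpha_bound r n r2 hn.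
have [q [p [hq [hp hF]]]] := Fn_Z r n.
have hn2 := divn_eq n r; have hb := ltn_pmod n r0.
move: hF hn2 hb ha hq; move: (n %/ r) (n %% r) => al be hF hn2 hb ha hq.
have hp' : p = 0 \/ p = 1 by lia.
subst al.
case: (ltnP be r.-1) => hbe.
- case: (ltnP be q) => hbq.
  +
    left; exists (q * r + be); split; first by nia.
    have -> : n - (q * r + be) = (q + p) * r + 0 by rewrite mulnDl; lia.
    rewrite mulnDr (@cnt_KJ r r0) ?(@cnt_KJ r r0); try lia.
  + case: (posnP (q + p)) => hqp.
    *
      right; have -> : n.+1 = 0 * r + be.+1 by lia.
      rewrite (@cnt_KJ r r0); try lia.
    *
      left; exists (q * r + r.-1); split; first by nia.
      have -> : n - (q * r + r.-1) = (q + p).-1 * r + be.+1.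
      { case: hp' => ?; subst p.
        - move: hqp hn2; rewrite addn0; case: q {hbq hF ha} => [|q'] // _ hn2.
          rewrite /=; lia.
        - rewrite addn1 /=; lia. }
      rewrite mulnDr (@cnt_KJ r r0) ?(@cnt_KJ r r0); try lia.
-
  left; exists (q * r + r.-1); split; first by nia.
  have -> : n - (q * r + r.-1) = (q + p) * r + 0 by rewrite mulnDl; lia.
  rewrite mulnDr (@cnt_KJ r r0) ?(@cnt_KJ r r0); try lia.
Qed.

Set Bullet Behavior "None".

Arguments up {r n}.
Arguments low1 {r n}.

Lemma bigmin_ge c x (s : seq nat) (F : nat -> nat) : c <= x -> (forall k, k \in s -> c <= F k) ->
  c <= \big[minn/x]_(k <- s) F k.
Proof.
move=> hx; elim: s => [|a s IH] hF; first by rewrite big_nil.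
rewrite big_cons leq_min hF ?mem_head //=; apply: IH => k ks.
by apply: hF; rewrite in_cons ks orbT.
Qed.

Lemma bigmin_le x (s : seq nat) (F : nat -> nat) k0 : k0 \in s -> \big[minn/x]_(k <- s) F k <= F k0.
Proof.
elim: s => // a s IH; rewrite in_cons big_cons => /orP [/eqP-> | h].
- exact: geq_minl.
- exact: leq_trans (geq_minr _ _) (IH h).
Qed.

Lemma tlz_pos r m : 0 < r -> tlz r m%:Z = cnt r m.
Proof. by move=> r0; rewrite /= tl_cnt. Qed.

Definition term r (n k : nat) : nat := tlz r (k%:Z - 1) + tlz r (n%:Z - (k%:Z - 1)).

Lemma term0 r n : 0 < r -> term r n 0 = cnt r n.+1.
Proof.
move=> r0; rewrite /term; have -> : ((n%:Z - (0%:Z - 1)) = n.+1%:Z)%R by lia.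
by rewrite tlz_pos.
Qed.

Lemma termS r n i : 0 < r -> i <= n -> term r n i.+1 = cnt r i + cnt r (n - i).
Proof.
move=> r0 hi; rewrite /term; have -> : ((i.+1%:Z - 1) = i%:Z)%R by lia.
have -> : ((n%:Z - i%:Z) = (n - i)%nat%:Z)%R by lia.
by rewrite !tlz_pos.
Qed.

Lemma termL r n : 0 < r -> term r n n.+2 = cnt r n.+1.
Proof.
move=> r0; rewrite /term; have -> : ((n.+2%:Z - 1) = n.+1%:Z)%R by lia.
have -> : ((n%:Z - n.+1%:Z) = (-1)%R)%R by lia.
by rewrite tlz_pos // addn0.
Qed.

Lemma Rfun_pos r n : 2 <= r -> n <= r * (r - 1) - 2 -> Rfun r n%:Z = Fn r n.
Proof.
move=> r2 hn; have r0 : 0 < r by lia.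
rewrite /Rfun /=.
have -> : n + (1 + (1 + 1)) = n.+3 by rewrite !addnS addn0.
have -> : tlz r (-1) + tlz r (n%:Z + 1) = cnt r n.+1.
  have -> : ((n%:Z + 1) = n.+1%:Z)%R by lia.
  by rewrite tlz_pos.
apply/eqP; rewrite eqn_leq; apply/andP; split.
- case: (up r2 hn) => [[i [hi hle]]|hle].
  + apply: leq_trans (@bigmin_le _ _ _ i.+1 _) _.
      by rewrite mem_index_iota; lia.
    by have := @termS r n i r0 hi; rewrite /term => ->; lia.
  + apply: leq_trans (@bigmin_le _ _ _ 0 _) _.
      by rewrite mem_index_iota.
    by have := @term0 r n r0; rewrite /term => ->; lia.
- apply: bigmin_ge; first by have := low1 r2 hn; lia.
  move=> k; rewrite mem_index_iota => /andP [_ hk].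
  have : Fn r n <= term r n k; last by rewrite /term.
  case: k hk => [|i] hk; first by rewrite term0 //; have := low1 r2 hn; lia.
  case: (leqP i n) => hi.
  + rewrite termS //; have := @low2 r n i (n - i) r2 hn; lia.
  + have -> : i = n.+1 by lia.
    rewrite termL //; have := low1 r2 hn; lia.
Qed.

Lemma Rfun_m1 r : 0 < r -> Rfun r (-1)%R = 1.
Proof.
move=> r0; rewrite /Rfun /=.
rewrite !big_cons big_nil /tlz /= !tl_cnt //.
Qed.

Lemma Rfun_le_m2 r (N : int) : (N <= -2)%R -> Rfun r N = 0.
Proof. by move=> h; rewrite /Rfun h. Qed.

Definition jc r n := (2 * (n %% r) + 2 <= n %/ r) || (n %% r == r.-1).

Lemma Fn0 r : 2 <= r -> Fn r 0 = 1.
Proof. by rewrite /Fn div0n mod0n; case: r => [|[|r]]. Qed.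

Lemma Fn_step r n : 2 <= r -> 0 < n -> n <= r * (r - 1) - 2 -> Fn r n = Fn r n.-1 + jc r n.
Proof.
move=> r2 n0 hn; have r0 : 0 < r by lia.
have ha := @alpha_bound r n r2 hn.
have [q [p [hq [hp hF]]]] := Fn_Z r n.
have [q' [p' [hq' [hp' hF']]]] := Fn_Z r n.-1.
have hd := divn_eq n r; have hm := ltn_pmod n r0.
have hd' := divn_eq n.-1 r; have hm' := ltn_pmod n.-1 r0.
rewrite /jc.
move: hF hF' hq hq' hd hd' hm hm' ha.
move: (n %/ r) (n %% r) (n.-1 %/ r) (n.-1 %% r) => a b a' b' hF hF' hq hq' hd hd' hm hm' ha.
have hpp : (p = 0 \/ p = 1) /\ (p' = 0 \/ p' = 1) by lia.
case: (posnP b) => hb.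
-
  have E : a' * r + b' = a.-1 * r + r.-1.
    case: a hd {hF hq ha} => [|a] hd; first by lia.
    rewrite /= mulSn in hd *; lia.
  have [h1 h2] := uniq_dm r0 E hm' ltac:(lia).
  subst b; move: hF'; rewrite h2 eqxx => hF'.
  move: hF; rewrite (_ : (0 == r.-1) = false); last by apply/eqP; lia.
  move=> hF.
  have ha0 : 0 < a by move: hd n0; case: (a) => //; lia.
  case: hpp => [[]?[]?]; subst p p'.
  + lia.
  + have hqq : q = q'.+1 by lia.
    subst q; lia.
  + have hqq : q = q' by lia.
    subst q; lia.
  + lia.
- have E : a' * r + b' = a * r + b.-1 by lia.
  have [h1 h2] := uniq_dm r0 E hm' ltac:(lia).
  subst a' b'.
  move: hF'; rewrite (_ : (b.-1 == r.-1) = false); last by apply/eqP; lia.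
  move=> hF'.
  have hqq : q = q' /\ p = p' by lia.
  case: hqq => ??; subst q' p'.
  move: hF; case: eqP => he hF; lia.
Qed.

Lemma genus2 r : genus r * 2 = r * (r - 1).
Proof.
rewrite /genus divnK // dvdn2 oddM.
by case: r => // s; rewrite subSS subn0 /=; case: (odd s).
Qed.

Lemma G2eq r : 2 <= r -> ((genus r)%:Z * 2 - 2)%R = Posz (r * (r - 1) - 2).
Proof. move=> r2; have := genus2 r; have : 2 <= r * (r - 1) by nia. lia. Qed.

Lemma jumpJ r N : 2 <= r -> is_jump r N <->
  (N = (-1)%R \/ exists n, N = Posz n /\ 0 < n /\ n <= r * (r - 1) - 2 /\ jc r n).
Proof.
move=> r2; have r0 : 0 < r by lia.
have hM : 0 <= r * (r - 1) - 2 by [].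
rewrite /is_jump G2eq //.
case: N => [n|k].
- case: n => [|m].
  + rewrite (_ : (0%:Z - 1)%R = (-1)%R) // Rfun_m1 // Rfun_pos //.
    rewrite Fn0 // ltnn andbF; split => //; case=> // [[n [hn [hn0 _]]]]. 
    by move: hn => [] hn; lia.
  + case: (leqP m.+1 (r * (r - 1) - 2)) => hm.
    * rewrite (_ : (m.+1%:Z - 1)%R = Posz m); last by lia.
      rewrite !Rfun_pos //; last by lia.
      rewrite (@Fn_step r m.+1) //=.
      split.
      -- move=> /andP [_ h]; right; exists m.+1; do !split => //.
         by move: h; case: (jc r m.+1) => //; rewrite addn0 ltnn.
      -- case=> [h|[n [[] <- [_ [_ hj]]]]]; first by [].
         rewrite (_ : (_ <= _)%R); last by lia.
         by rewrite hj addn1 ltnSn.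
    * split.
      -- move=> /andP [_ /andP [h _]]; lia.
      -- case=> // [[n [[] hn [_ [h _]]]]]; lia.
- case: k => [|k].
  + rewrite (_ : (Negz 0 - 1)%R = (-2)%R) // Rfun_le_m2 // (_ : Negz 0 = (-1)%R) //.
    rewrite Rfun_m1 //; split => // _; first by left.
  + split.
    -- move=> /andP [h _]; lia.
    -- by case=> // [[n [h _]]].
Qed.

Lemma rhsJ r N : 2 <= r ->
  ((exists (alpha beta : int),
         (-1 <= alpha)%R /\ (alpha <= r%:Z - 2)%R /\ (0 <= beta)%R /\ (beta <= r%:Z - 1)%R /\
             ((2 * beta + 2 <= alpha)%R \/ beta = (r%:Z - 1)%R) /\
             N = (alpha * r%:Z + beta)%R)
      /\ N <> ((genus r)%:Z * 2 - 1)%R) <->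
  (N = (-1)%R \/ exists n, N = Posz n /\ 0 < n /\ n <= r * (r - 1) - 2 /\ jc r n).
Proof.
move=> r2; have r0 : 0 < r by lia.
have hg := genus2 r.
have hM : 2 <= r * (r - 1) by nia.
split.
- case=> [[al [be [h1 [h2 [h3 [h4 [h5 hN]]]]]]] hne].
  case: al h1 h2 h5 hN => [a|k] h1 h2 h5 hN.
  + case: be h3 h4 h5 hN => [b|k] h3 h4 h5 hN; last by [].
    right; exists (a * r + b); split; first by lia.
    have hb : b < r by lia.
    have hdm : (a * r + b) %/ r = a /\ (a * r + b) %% r = b.
      by rewrite divnMDl // modnMDl divn_small // modn_small // addn0.
    rewrite /jc; case: hdm => -> ->.
    split; first by case: h5 => h5; nia.
    split; first by nia.
    by case: h5 => h5; apply/orP; [left|right; apply/eqP]; lia.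
  + have k0 : k = 0 by lia.
    subst k; left; case: h5 => h5; lia.
- case=> [->|[n [-> [hn0 [hn hj]]]]].
  + split; last by lia.
    exists (-1)%R, (r%:Z - 1)%R; do !split; try lia.
  + split; last by lia.
    exists (Posz (n %/ r)), (Posz (n %% r)).
    have ha := @alpha_bound r n r2 hn.
    have hm := ltn_pmod n r0; have hd := divn_eq n r.
    do !split; try lia.
    by move: hj; rewrite /jc => /orP [h|/eqP h]; [left|right]; lia.
Qed.

Lemma is_jump_m1 r : 2 <= r -> is_jump r (-1)%R.
Proof. by move=> r2; apply/(@jumpJ r _ r2); left. Qed.

Lemma is_jump_0 r : 2 <= r -> is_jump r (Posz 0) = false.
Proof.
move=> r2; apply/negbTE/negP => /(@jumpJ r _ r2) [//|[n [[] <- [h _]]]] //.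
Qed.

Lemma is_jump_pos r n : 2 <= r -> 0 < n -> n <= r * (r - 1) - 2 -> is_jump r (Posz n) = jc r n.
Proof.
move=> r2 n0 hn; apply/idP/idP.
- by move/(@jumpJ r _ r2) => [//|[m [[] <- [_ [_ h]]]]].
- by move=> h; apply/(@jumpJ r _ r2); right; exists n.
Qed.

Lemma stepR r m : 2 <= r -> m <= (r * (r - 1) - 2).+1 ->
  Rfun r (m%:Z - 1)%R = Rfun r (m%:Z - 2)%R + is_jump r (m%:Z - 1)%R.
Proof.
move=> r2 hm; have r0 : 0 < r by lia.
case: m hm => [|[|n]] hm.
- rewrite (_ : (0%:Z - 1)%R = (-1)%R) // (_ : (0%:Z - 2)%R = (-2)%R) //.
  by rewrite Rfun_m1 // Rfun_le_m2 // is_jump_m1.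
- rewrite (_ : (1%:Z - 1)%R = Posz 0) // (_ : (1%:Z - 2)%R = (-1)%R) //.
  by rewrite is_jump_0 // Rfun_m1 // Rfun_pos // Fn0.
- rewrite (_ : (n.+2%:Z - 1)%R = Posz n.+1); last by lia.
  rewrite (_ : (n.+2%:Z - 2)%R = Posz n); last by lia.
  rewrite !Rfun_pos //; try lia.
  by rewrite is_jump_pos // (@Fn_step r n.+1) //; lia.
Qed.

Lemma count_jumps r m : 2 <= r -> m <= (r * (r - 1) - 2).+2 ->
  count (is_jump r) [seq (k%:Z - 1)%R | k <- iota 0 m] = Rfun r (m%:Z - 2)%R.
Proof.
move=> r2; elim: m => [|m IH] hm.
- by rewrite Rfun_le_m2.
- rewrite -addn1 iotaD map_cat count_cat IH; last by lia.
  rewrite /= add0n addn0 (_ : (Posz (m + 1)%nat - 2)%R = (m%:Z - 1)%R); last by lia.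
  by rewrite stepR //; lia.
Qed.


From mathcomp Require Import all_boot all_order all_algebra.
Import Order.TTheory GRing.Theory Num.Theory.


Lemma Fn_val r : 2 <= r ->
  Fn r (r * (r - 1) - 2) = (if odd r then (r ^ 2 - 1) %/ 4 else r ^ 2 %/ 4).
Proof.
move=> r2; have r0 : 0 < r by lia.
have [q [p [hq [hp hF]]]] := Fn_Z r (r * (r - 1) - 2).
have hM : r * (r - 1) - 2 = (r - 2) * r + (r - 2).
  have -> : r = (r - 2) + 2 by lia.
  move: (r - 2) => s; rewrite addnK. nia.
have hs : r - 2 < r by lia.
have [h1 h2] : (r * (r - 1) - 2) %/ r = r - 2 /\ (r * (r - 1) - 2) %% r = r - 2.
  by rewrite hM divnMDl // modnMDl divn_small // modn_small // addn0.
move: hF; rewrite h2 (_ : (r - 2 == r.-1) = false); last by apply/eqP; lia.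
rewrite h1 in hq => hF.
have hpp : p = 0 \/ p = 1 by lia.
case: hpp => ?; subst p.
- have hr : r = (q + 1).*2 by lia.
  have -> : odd r = false by rewrite hr odd_double.
  have -> : r ^ 2 = (q + 1) * (q + 1) * 4 by rewrite -mulnn hr -muln2; lia.
  rewrite mulnK //; lia.
- have hr : r = (q + 1).*2.+1 by lia.
  have -> : odd r = true by rewrite hr oddS odd_double.
  have -> : r ^ 2 - 1 = (q + 1) * (q + 2) * 4 by rewrite -mulnn hr -muln2; lia.
  rewrite mulnK //; lia.
Qed.

Theorem lemma3p16 (r : nat) (hr : (2 <= r)%N) :
  (size (jumps r) = Rfun r ((genus r)%:Z * 2 - 2)%R /\
   Rfun r ((genus r)%:Z * 2 - 2)%R = (if odd r then (r ^ 2 - 1) %/ 4 else r ^ 2 %/ 4)%N)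
  /\
  (forall N : int,
     is_jump r N <->
     ((exists (alpha beta : int),
         (-1 <= alpha)%R /\ (alpha <= r%:Z - 2)%R /\ (0 <= beta)%R /\ (beta <= r%:Z - 1)%R /\
             ((2 * beta + 2 <= alpha)%R \/ beta = (r%:Z - 1)%R) /\
             N = (alpha * r%:Z + beta)%R)
      /\ N <> ((genus r)%:Z * 2 - 1)%R)).
Proof.
have G2 := @G2eq r hr.
split; last first.
  move=> N; split => h.
  - by apply/(@rhsJ r N hr); apply/(@jumpJ r N hr).
  - by apply/(@jumpJ r N hr); apply/(@rhsJ r N hr).
rewrite G2 Rfun_pos // Fn_val //; split => //.
rewrite /jumps size_filter.
have hg := genus2 r.
have hM : 2 <= r * (r - 1) by nia.
have -> : 2 * genus r = (r * (r - 1) - 2).+2 by lia.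
rewrite (@count_jumps r _ hr (leqnn _)).
rewrite (_ : ((r * (r - 1) - 2).+2%:Z - 2)%R = Posz (r * (r - 1) - 2)); last by lia.
by rewrite Rfun_pos // Fn_val.
Qed.
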